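(* Let $V$ be a commutative unital quantale whose underlying lattice is a frame, and suppose moreover that $\otimes=\wedge$ in $V$. For a $V$-group $(Y,b,+)$ the following conditions are equivalent: (i) $(Y,b,+)$ is a protomodular object in $\mathsf{VGrp}$; (ii) $(Y,b,+)$ is a Mal'tsev object in $\mathsf{VGrp}$; (iii) $(Y,b,+)$ is a strongly unital object in $\mathsf{VGrp}$; (iv) $(Y,b)$ is a symmetric $V$-category, i.e. $b(y,y')=b(y',y)$ for all $y,y'\in Y$; (v) $(Y,b,+)$ is an internal group in $\mathsf{VCat}$.
   Context: A commutative unital quantale $V$ is a complete lattice (top $\top$, bottom $\bot$) with a commutative associative operation $\otimes$ with unit $k$ such that $v\otimes\bigvee_i u_i=\bigvee_i(v\otimes u_i)$ for all families (including the empty one). Here $\otimes=\wedge$, so $k=\top$. A $V$-category $(X,a)$ is a set $X$ with a map $a\colon X\times X\to V$ such that $k\le a(x,x)$ and $a(x,x')\otimes a(x',x'')\le a(x,x'')$ for all $x,x',x''$. A $V$-functor $f\colon(X,a)\to(Y,b)$ is a map with $a(x,x')\le b(f(x),f(x'))$; these form the category $\mathsf{VCat}$. A $V$-group $(X,a,+)$ is a $V$-category with a group structure (written additively, not necessarily abelian) such that $a(x_1,x_2)\otimes a(x_1',x_2')\le a(x_1+x_1',x_2+x_2')$ for all elements; $V$-homomorphisms are group homomorphisms that are $V$-functors, forming the category $\mathsf{VGrp}$. Since $k=\top$, $\mathsf{VGrp}$ is pointed (zero object: the one-element group). Limits in $\mathsf{VGrp}$ are computed as in groups, with the initial structure; e.g.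 the product of $(X,a)$ and $(Y,b)$ carries $(a\wedge b)((x,y),(x',y'))=a(x,x')\wedge b(y,y')$, and subgroups (e.g. kernels, pullbacks) carry the restricted structure. An internal group in $\mathsf{VCat}$ is a group object in $\mathsf{VCat}$ with respect to its cartesian product (structure $a\wedge b$), i.e. a $V$-group whose multiplication, inversion and unit are all $V$-functors for the product structures. In a pointed finitely complete category: two morphisms with common codomain are jointly strongly epimorphic if whenever both factor through a monomorphism $m$, then $m$ is an isomorphism. A point over $Y$ is a split epimorphism $f\colon A\to Y$ with a chosen section $s$; it is strong if the kernel $n\colon X\to A$ of $f$ and $s$ are jointly strongly epimorphic, and stably strong if every pullback of it along any morphism $g\colon Z\to Y$ (with the induced section) is strong. An object $Y$ is: a protomodular object if every point over $Y$ is stably strong; a Mal'tsev object if for every pair of points $(f\colon A\to Y,s)$, $(g\colon Z\to Y,t)$ the morphisms $\langle 1_A,tf\rangle\colon A\to A\times_Y Z$ and $\langle sg,1_Z\rangle\colon Z\to A\times_Y Z$ are jointly strongly epimorphic; a strongly unital object if the point $(\pi_2\colon Y\times Y\to Y,\ \langle 1,1\rangle)$ is stably strong. *)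

(* Defs.v *)
Set Implicit Arguments.
Unset Strict Implicit.

(** A frame: a complete lattice (arbitrary joins [fsup] of subsets) in which
    binary meets distribute over arbitrary joins.  A commutative unital quantale
    whose underlying lattice is a frame and with tensor = meet (so unit k = top)
    is exactly such a structure: the quantale law [v (x) \/ u_i = \/ (v (x) u_i)]
    is then the frame law [fdistr]. *)
Record frame := Frame {
  fcar :> Type;
  fle : fcar -> fcar -> Prop;
  fle_refl : forall v, fle v v;
  fle_trans : forall u v w, fle u v -> fle v w -> fle u w;
  fle_antisym : forall u v, fle u v -> fle v u -> u = v;
  fsup : (fcar -> Prop) -> fcar;
  fsup_ub : forall (S : fcar -> Prop) v, S v -> fle v (fsup S);
  fsup_least : forall (S : fcar -> Prop) w, (forall v, S v -> fle v w) -> fle (fsup S) w;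
  fmeet : fcar -> fcar -> fcar;
  fmeet_l : forall u v, fle (fmeet u v) u;
  fmeet_r : forall u v, fle (fmeet u v) v;
  fmeet_glb : forall u v w, fle w u -> fle w v -> fle w (fmeet u v);
  ftop : fcar;
  ftop_max : forall v, fle v ftop;
  fdistr : forall v (S : fcar -> Prop),
    fmeet v (fsup S) = fsup (fun w => exists u, S u /\ w = fmeet v u)
}.
Arguments fle {f}. Arguments fmeet {f}. Arguments ftop {f}. Arguments fsup {f}.

Record VGroup (V : frame) := VGroupMk {
  vcar :> Type;
  vadd : vcar -> vcar -> vcar;
  vopp : vcar -> vcar;
  vzero : vcar;
  vaddA : forall x y z, vadd x (vadd y z) = vadd (vadd x y) z;
  vadd0l : forall x, vadd vzero x = x;
  vadd0r : forall x, vadd x vzero = x;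
  vaddNr : forall x, vadd x (vopp x) = vzero;
  vaddNl : forall x, vadd (vopp x) x = vzero;
  vdist : vcar -> vcar -> V;
  vdist_refl : forall x, fle ftop (vdist x x);
  vdist_trans : forall x y z, fle (fmeet (vdist x y) (vdist y z)) (vdist x z);
  vdist_add : forall x1 x2 x1' x2',
    fle (fmeet (vdist x1 x2) (vdist x1' x2')) (vdist (vadd x1 x1') (vadd x2 x2'))
}.
Arguments vadd {V v}. Arguments vopp {V v}. Arguments vzero {V v}. Arguments vdist {V v}.

Record VHom (V : frame) (A B : VGroup V) := VHomMk {
  vhom :> A -> B;
  vhom_add : forall x y, vhom (vadd x y) = vadd (vhom x) (vhom y);
  vhom_le : forall x x', fle (vdist x x') (vdist (vhom x) (vhom x'))
}.

(** Morphisms of VGrp are equal iff their underlying maps are equal;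
    all equalities of morphisms below are stated pointwise. *)
Section VGrpCat.
Variable V : frame.

Definition is_mono (M A : VGroup V) (m : VHom M A) : Prop :=
  forall (W : VGroup V) (u v : VHom W M),
    (forall w, m (u w) = m (v w)) -> forall w, u w = v w.

Definition is_iso (M A : VGroup V) (m : VHom M A) : Prop :=
  exists m' : VHom A M, (forall x, m' (m x) = x) /\ (forall a, m (m' a) = a).

Definition jointly_strongly_epi (X1 X2 A : VGroup V) (f1 : VHom X1 A) (f2 : VHom X2 A) : Prop :=
  forall (M : VGroup V) (m : VHom M A), is_mono m ->
    (exists u1 : VHom X1 M, forall x, m (u1 x) = f1 x) ->
    (exists u2 : VHom X2 M, forall x, m (u2 x) = f2 x) ->
    is_iso m.

Definition is_kernel (A Y K : VGroup V) (f : VHom A Y) (n : VHom K A) : Prop :=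
  (forall k, f (n k) = vzero) /\
  forall (W : VGroup V) (h : VHom W A), (forall w, f (h w) = vzero) ->
    (exists u : VHom W K, forall w, n (u w) = h w) /\
    (forall u1 u2 : VHom W K, (forall w, n (u1 w) = h w) -> (forall w, n (u2 w) = h w) ->
       forall w, u1 w = u2 w).

Definition is_pullback (A Z Y P : VGroup V) (f : VHom A Y) (g : VHom Z Y)
    (p1 : VHom P A) (p2 : VHom P Z) : Prop :=
  (forall p, f (p1 p) = g (p2 p)) /\
  forall (W : VGroup V) (h1 : VHom W A) (h2 : VHom W Z), (forall w, f (h1 w) = g (h2 w)) ->
    (exists u : VHom W P, (forall w, p1 (u w) = h1 w) /\ (forall w, p2 (u w) = h2 w)) /\
    (forall u1 u2 : VHom W P,
       (forall w, p1 (u1 w) = h1 w) -> (forall w, p2 (u1 w) = h2 w) ->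
       (forall w, p1 (u2 w) = h1 w) -> (forall w, p2 (u2 w) = h2 w) ->
       forall w, u1 w = u2 w).

Definition is_product (Y1 Y2 P : VGroup V) (q1 : VHom P Y1) (q2 : VHom P Y2) : Prop :=
  forall (W : VGroup V) (h1 : VHom W Y1) (h2 : VHom W Y2),
    (exists u : VHom W P, (forall w, q1 (u w) = h1 w) /\ (forall w, q2 (u w) = h2 w)) /\
    (forall u1 u2 : VHom W P,
       (forall w, q1 (u1 w) = h1 w) -> (forall w, q2 (u1 w) = h2 w) ->
       (forall w, q1 (u2 w) = h1 w) -> (forall w, q2 (u2 w) = h2 w) ->
       forall w, u1 w = u2 w).

Definition is_point (A Y : VGroup V) (f : VHom A Y) (s : VHom Y A) : Prop :=
  forall y, f (s y) = y.

Definition strong_point (A Y : VGroup V) (f : VHom A Y) (s : VHom Y A) : Prop :=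
  forall (K : VGroup V) (n : VHom K A), is_kernel f n -> jointly_strongly_epi n s.

Definition stably_strong (A Y : VGroup V) (f : VHom A Y) (s : VHom Y A) : Prop :=
  forall (Z : VGroup V) (g : VHom Z Y) (P : VGroup V) (p1 : VHom P A) (p2 : VHom P Z),
    is_pullback f g p1 p2 ->
    forall t : VHom Z P, (forall z, p1 (t z) = s (g z)) -> (forall z, p2 (t z) = z) ->
    strong_point p2 t.

Definition protomodular_object (Y : VGroup V) : Prop :=
  forall (A : VGroup V) (f : VHom A Y) (s : VHom Y A), is_point f s -> stably_strong f s.

Definition maltsev_object (Y : VGroup V) : Prop :=
  forall (A : VGroup V) (f : VHom A Y) (s : VHom Y A)
         (Z : VGroup V) (g : VHom Z Y) (t : VHom Y Z),
    is_point f s -> is_point g t ->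
    forall (P : VGroup V) (p1 : VHom P A) (p2 : VHom P Z), is_pullback f g p1 p2 ->
    forall (al : VHom A P) (be : VHom Z P),
      (forall a, p1 (al a) = a) -> (forall a, p2 (al a) = t (f a)) ->
      (forall z, p1 (be z) = s (g z)) -> (forall z, p2 (be z) = z) ->
      jointly_strongly_epi al be.

Definition strongly_unital_object (Y : VGroup V) : Prop :=
  forall (P : VGroup V) (q1 q2 : VHom P Y), is_product q1 q2 ->
  forall d : VHom Y P, (forall y, q1 (d y) = y) -> (forall y, q2 (d y) = y) ->
  stably_strong q2 d.

Definition symmetric_VCat (Y : VGroup V) : Prop :=
  forall y y' : Y, vdist y y' = vdist y' y.

(** Internal group in VCat: multiplication (Y x Y, b /\ b) -> (Y, b), inversion
    (Y, b) -> (Y, b), and unit from the terminal V-category ({*}, top) are V-functors. *)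
Definition internal_group_VCat (Y : VGroup V) : Prop :=
  (forall y1 y2 y1' y2' : Y,
     fle (fmeet (vdist y1 y2) (vdist y1' y2')) (vdist (vadd y1 y1') (vadd y2 y2'))) /\
  (forall y y' : Y, fle (vdist y y') (vdist (vopp y) (vopp y'))) /\
  (forall u u' : unit, fle (@ftop V) (vdist (@vzero V Y) (@vzero V Y))).

End VGrpCat.

(* Main.v *)
Require Import Defs.
From Stdlib Require Import ProofIrrelevance ZArith Lia.


Section Fr.
Context {V : frame}.
Notation "a ⊑ b" := (@fle V a b) (at level 70).
Notation "a ⊓ b" := (@fmeet V a b) (at level 40, left associativity).

Lemma lrefl (a : V) : a ⊑ a. Proof. apply fle_refl. Qed.
Lemma ltrans (a b c : V) : a ⊑ b -> b ⊑ c -> a ⊑ c. Proof. apply fle_trans. Qed.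
Lemma mono (a a' b b' : V) : a ⊑ a' -> b ⊑ b' -> a ⊓ b ⊑ a' ⊓ b'.
Proof. intros; apply fmeet_glb; [eapply fle_trans; [apply fmeet_l|eauto] | eapply fle_trans; [apply fmeet_r|eauto]]. Qed.
Lemma ml (a b c : V) : a ⊑ c -> a ⊓ b ⊑ c. Proof. intros; eapply fle_trans; [apply fmeet_l|eauto]. Qed.
Lemma mr (a b c : V) : b ⊑ c -> a ⊓ b ⊑ c. Proof. intros; eapply fle_trans; [apply fmeet_r|eauto]. Qed.
Lemma glb (a b c : V) : c ⊑ a -> c ⊑ b -> c ⊑ a ⊓ b. Proof. apply fmeet_glb. Qed.
Lemma mcomm (a b : V) : a ⊓ b = b ⊓ a.
Proof. apply fle_antisym; apply glb; auto using fmeet_l, fmeet_r. Qed.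
Lemma sup_in (S : V -> Prop) x w : S x -> w ⊑ x -> w ⊑ fsup S.
Proof. intros; eapply fle_trans; eauto using fsup_ub. Qed.
Lemma sup_meet_le (S T : V -> Prop) w :
  (forall s t, S s -> T t -> s ⊓ t ⊑ w) -> fsup S ⊓ fsup T ⊑ w.
Proof.
  intros H. rewrite fdistr. apply fsup_least. intros r [t [Ht ->]].
  rewrite mcomm, fdistr. apply fsup_least. intros r [s [Hs ->]].
  rewrite mcomm. auto.
Qed.
Lemma top_le (a : V) : ftop ⊑ a -> forall b, b ⊑ a.
Proof. intros; eapply fle_trans; [apply ftop_max|auto]. Qed.
End Fr.
Section Grp.
Context {V : frame}.
Notation "a ⊑ b" := (@fle V a b) (at level 70).
Notation "a ⊓ b" := (@fmeet V a b) (at level 40, left associativity).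
Context {G : VGroup V}.
Notation "x ⊕ y" := (@vadd V G x y) (at level 50, left associativity).
Notation "⊖ x" := (@vopp V G x) (at level 35).
Notation "'O'" := (@vzero V G).

Lemma addKl (x y : G) : ⊖ x ⊕ (x ⊕ y) = y.
Proof. now rewrite vaddA, vaddNl, vadd0l. Qed.
Lemma addKl' (x y : G) : x ⊕ (⊖ x ⊕ y) = y.
Proof. now rewrite vaddA, vaddNr, vadd0l. Qed.
Lemma addKr (x y : G) : y ⊕ x ⊕ ⊖ x = y.
Proof. now rewrite <- vaddA, vaddNr, vadd0r. Qed.
Lemma addKr' (x y : G) : y ⊕ ⊖ x ⊕ x = y.
Proof. now rewrite <- vaddA, vaddNl, vadd0r. Qed.
Lemma cancel_l (x y z : G) : x ⊕ y = x ⊕ z -> y = z.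
Proof. intros H. rewrite <- (addKl x y), H. apply addKl. Qed.
Lemma opp_unique (x y : G) : x ⊕ y = O -> y = ⊖ x.
Proof. intros H. apply (cancel_l x). now rewrite H, vaddNr. Qed.
Lemma opp_opp (x : G) : ⊖ (⊖ x) = x.
Proof. symmetry. apply opp_unique. apply vaddNl. Qed.
Lemma opp_add (x y : G) : ⊖ (x ⊕ y) = ⊖ y ⊕ ⊖ x.
Proof. symmetry. apply opp_unique. rewrite vaddA, addKr. apply vaddNr. Qed.
Lemma opp0 : ⊖ O = O.
Proof. symmetry; apply opp_unique. apply vadd0l. Qed.
Lemma sub_eq0 (x y : G) : ⊖ x ⊕ y = O -> x = y.
Proof. intros H. rewrite <- (addKl' x y), H. symmetry; apply vadd0r. Qed.

Lemma dtop (x : G) (b : V) : b ⊑ vdist x x.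
Proof. apply top_le. apply vdist_refl. Qed.
Lemma daddl (x x' y : G) : vdist x x' ⊑ vdist (y ⊕ x) (y ⊕ x').
Proof. eapply ltrans; [|apply vdist_add]. apply glb; [apply dtop|apply lrefl]. Qed.
Lemma daddr (x x' y : G) : vdist x x' ⊑ vdist (x ⊕ y) (x' ⊕ y).
Proof. eapply ltrans; [|apply vdist_add]. apply glb; [apply lrefl|apply dtop]. Qed.
Lemma dbeta (x y : G) : vdist x y = vdist O (⊖ x ⊕ y).
Proof.
  apply fle_antisym.
  - eapply ltrans; [apply (daddl _ _ (⊖ x))|]. rewrite vaddNl. apply lrefl.
  - eapply ltrans; [apply (daddl _ _ x)|]. rewrite vadd0r, addKl'. apply lrefl.
Qed.
Lemma dopp (x x' : G) : vdist x x' ⊑ vdist (⊖ x') (⊖ x).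
Proof.
  eapply ltrans; [apply (daddl _ _ (⊖ x'))|].
  eapply ltrans; [apply (daddr _ _ (⊖ x))|].
  rewrite vaddNl, vadd0l, addKr. apply lrefl.
Qed.
Lemma bconj (a w : G) : vdist O a ⊑ vdist O (⊖ w ⊕ a ⊕ w).
Proof.
  eapply ltrans; [apply (daddl _ _ (⊖ w))|].
  eapply ltrans; [apply (daddr _ _ w)|].
  rewrite vadd0r, vaddNl. apply lrefl.
Qed.
Lemma badd (a b : G) : vdist O a ⊓ vdist O b ⊑ vdist O (a ⊕ b).
Proof. eapply ltrans; [apply vdist_add|]. rewrite vadd0l. apply lrefl. Qed.
End Grp.

Section Hom.
Context {V : frame}.
Context {A B : VGroup V}.
Variable h : VHom A B.
Lemma hom0 : h vzero = vzero.
Proof.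
  apply (cancel_l (h vzero)). rewrite <- vhom_add, !vadd0r. reflexivity.
Qed.
Lemma homN (x : A) : h (vopp x) = vopp (h x).
Proof. apply opp_unique. rewrite <- vhom_add, vaddNr. apply hom0. Qed.
End Hom.
Lemma sig_eq {T : Type} {P : T -> Prop} (a b : {x | P x}) : proj1_sig a = proj1_sig b -> a = b.
Proof. destruct a as [a pa], b as [b pb]; simpl; intros ->. f_equal. apply proof_irrelevance. Qed.

Section Cons.
Context {V : frame}.
Notation "a ⊑ b" := (@fle V a b) (at level 70).
Notation "a ⊓ b" := (@fmeet V a b) (at level 40, left associativity).
Notation "x ⊕ y" := (vadd x y) (at level 50, left associativity).
Notation "⊖ x" := (vopp x) (at level 35).

Definition subVG (G : VGroup V) (P : G -> Prop) (H0 : P vzero)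
  (Hadd : forall x y, P x -> P y -> P (x ⊕ y)) (Hopp : forall x, P x -> P (⊖ x)) : VGroup V.
Proof.
  refine {| vcar := {x | P x};
            vadd := fun a b => exist _ (proj1_sig a ⊕ proj1_sig b) (Hadd _ _ (proj2_sig a) (proj2_sig b));
            vopp := fun a => exist _ (⊖ proj1_sig a) (Hopp _ (proj2_sig a));
            vzero := exist _ vzero H0;
            vdist := fun a b => vdist (proj1_sig a) (proj1_sig b) |}.
  - intros; apply sig_eq; simpl; apply vaddA.
  - intros; apply sig_eq; simpl; apply vadd0l.
  - intros; apply sig_eq; simpl; apply vadd0r.
  - intros; apply sig_eq; simpl; apply vaddNr.
  - intros; apply sig_eq; simpl; apply vaddNl.
  - intros; apply vdist_refl.
  - intros; apply vdist_trans.
  - intros; apply vdist_add.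
Defined.

Definition inclH G P H0 Hadd Hopp : VHom (@subVG G P H0 Hadd Hopp) G.
Proof.
  refine (@VHomMk V (@subVG G P H0 Hadd Hopp) G (fun a => proj1_sig a) _ _); intros; simpl.
  reflexivity. apply lrefl.
Defined.

Definition prodVG (A B : VGroup V) : VGroup V.
Proof.
  refine {| vcar := (A * B)%type;
            vadd := fun p q => (fst p ⊕ fst q, snd p ⊕ snd q);
            vopp := fun p => (⊖ fst p, ⊖ snd p);
            vzero := (vzero, vzero);
            vdist := fun p q => vdist (fst p) (fst q) ⊓ vdist (snd p) (snd q) |}.
  - intros; simpl; f_equal; apply vaddA.
  - intros [a b]; simpl; f_equal; apply vadd0l.
  - intros [a b]; simpl; f_equal; apply vadd0r.
  - intros [a b]; simpl; f_equal; apply vaddNr.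
  - intros [a b]; simpl; f_equal; apply vaddNl.
  - intros; apply glb; apply dtop.
  - intros; simpl. apply glb.
    + eapply ltrans; [|apply vdist_trans]. apply mono; apply fmeet_l.
    + eapply ltrans; [|apply vdist_trans]. apply mono; apply fmeet_r.
  - intros; simpl. apply glb.
    + eapply ltrans; [|apply vdist_add]. apply mono; apply fmeet_l.
    + eapply ltrans; [|apply vdist_add]. apply mono; apply fmeet_r.
Defined.

Definition fstH (A B : VGroup V) : VHom (prodVG A B) A.
Proof. refine (@VHomMk V (prodVG A B) A (fun p => fst p) _ _); intros; simpl. reflexivity. apply fmeet_l. Defined.
Definition sndH (A B : VGroup V) : VHom (prodVG A B) B.
Proof. refine (@VHomMk V (prodVG A B) B (fun p => snd p) _ _); intros; simpl. reflexivity. apply fmeet_r. Defined.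

Lemma conj_eq (G : VGroup V) (x1 x2 x1' x2' : G) :
  ⊖ (x1 ⊕ x1') ⊕ (x2 ⊕ x2') = (⊖ x1' ⊕ (⊖ x1 ⊕ x2) ⊕ x1') ⊕ (⊖ x1' ⊕ x2').
Proof. rewrite opp_add. rewrite <- (vaddA _ x1' _), addKl'. rewrite !vaddA. reflexivity. Qed.

Definition reVG (G : VGroup V) (Γ : G -> V) (H0 : ftop ⊑ Γ vzero)
  (Hadd : forall a b, Γ a ⊓ Γ b ⊑ Γ (a ⊕ b)) (Hconj : forall a w, Γ a ⊑ Γ (⊖ w ⊕ a ⊕ w)) : VGroup V.
Proof.
  refine {| vcar := vcar G; vadd := @vadd V G; vopp := @vopp V G; vzero := @vzero V G;
            vdist := fun x y => Γ (⊖ x ⊕ y) |}.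
  - apply vaddA.
  - apply vadd0l.
  - apply vadd0r.
  - apply vaddNr.
  - apply vaddNl.
  - intros; rewrite vaddNl; auto.
  - intros x y z. eapply ltrans; [apply Hadd|]. rewrite <- vaddA, addKl'. apply lrefl.
  - intros. rewrite conj_eq. eapply ltrans; [|apply Hadd]. apply mono; [apply Hconj|apply lrefl].
Defined.

Definition zeroH (A B : VGroup V) : VHom A B.
Proof. refine (@VHomMk V A B (fun _ => vzero) _ _); intros. symmetry; apply vadd0l. apply dtop. Defined.
Definition idH (A : VGroup V) : VHom A A.
Proof. refine (@VHomMk V A A (fun x => x) _ _); intros. reflexivity. apply lrefl. Defined.
Definition compH (A B C : VGroup V) (g : VHom B C) (f : VHom A B) : VHom A C.
Proof.
  refine (@VHomMk V A C (fun x => g (f x)) _ _); intros.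
  rewrite !vhom_add; reflexivity. eapply ltrans; apply vhom_le.
Defined.
End Cons.
Arguments compH {V A B C} g f.
Section Abs.
Context {V : frame}.
Notation "a ⊑ b" := (@fle V a b) (at level 70).
Notation "a ⊓ b" := (@fmeet V a b) (at level 40, left associativity).
Notation "x ⊕ y" := (vadd x y) (at level 50, left associativity).
Notation "⊖ x" := (vopp x) (at level 35).

Lemma mono_inj {M A : VGroup V} (m : VHom M A) : is_mono m -> forall x y, m x = m y -> x = y.
Proof.
  intros Hm x y Hxy.
  assert (H0 : m vzero = vzero) by apply hom0.
  assert (Ha : forall a b : M, m a = vzero -> m b = vzero -> m (a ⊕ b) = vzero).
  { intros a b Ha1 Hb. rewrite vhom_add, Ha1, Hb. apply vadd0l. }
  assert (Ho : forall a : M, m a = vzero -> m (⊖ a) = vzero).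
  { intros a Ha1. rewrite homN, Ha1. apply opp0. }
  set (W := subVG M (fun w => m w = vzero) H0 Ha Ho).
  assert (Hz : m (⊖ x ⊕ y) = vzero).
  { rewrite vhom_add, homN, Hxy. apply vaddNl. }
  pose proof (Hm W (inclH _ _ _ _ _) (zeroH W M)) as HH.
  assert (HH' : forall w : W, m (inclH _ _ H0 Ha Ho w) = m (zeroH W M w)).
  { intros [w pw]. simpl. rewrite pw. symmetry. apply hom0. }
  specialize (HH HH' (exist _ (⊖ x ⊕ y) Hz)). simpl in HH.
  apply sub_eq0. exact HH.
Qed.

Lemma pb_facts {A Z Y P : VGroup V} (f : VHom A Y) (g : VHom Z Y) (p1 : VHom P A) (p2 : VHom P Z) :
  is_pullback f g p1 p2 ->
  (forall q q', p1 q = p1 q' -> p2 q = p2 q' -> q = q') /\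
  (forall q q', vdist (p1 q) (p1 q') ⊓ vdist (p2 q) (p2 q') ⊑ vdist q q').
Proof.
  intros [Hc Hu].
  assert (H0 : f (fst (@vzero V (prodVG A Z))) = g (snd (@vzero V (prodVG A Z)))).
  { simpl. rewrite !hom0. reflexivity. }
  assert (Ha : forall a b : prodVG A Z, f (fst a) = g (snd a) -> f (fst b) = g (snd b) ->
                 f (fst (a ⊕ b)) = g (snd (a ⊕ b))).
  { intros a b Ha1 Hb. simpl. rewrite !vhom_add, Ha1, Hb. reflexivity. }
  assert (Ho : forall a : prodVG A Z, f (fst a) = g (snd a) -> f (fst (⊖ a)) = g (snd (⊖ a))).
  { intros a Ha1. simpl. rewrite !homN, Ha1. reflexivity. }
  set (Pc := subVG (prodVG A Z) (fun az : prodVG A Z => f (fst az) = g (snd az)) H0 Ha Ho).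
  set (h1 := compH (fstH A Z) (inclH _ _ H0 Ha Ho)).
  set (h2 := compH (sndH A Z) (inclH _ _ H0 Ha Ho)).
  assert (Hh : forall w, f (h1 w) = g (h2 w)).
  { intros [w pw]. exact pw. }
  destruct (Hu Pc h1 h2 Hh) as [[u [Hu1 Hu2]] _].
  assert (phi : VHom P Pc).
  { refine (@VHomMk V P Pc (fun p => exist _ (p1 p, p2 p) (Hc p)) _ _).
    - intros; apply sig_eq; simpl. rewrite !vhom_add. reflexivity.
    - intros; simpl. apply glb; apply vhom_le. }
  clear phi.
  set (phif := fun p => exist (fun az : prodVG A Z => f (fst az) = g (snd az)) (p1 p, p2 p) (Hc p) : Pc).
  assert (phiadd : forall x y, phif (x ⊕ y) = phif x ⊕ phif y).
  { intros; apply sig_eq; simpl. rewrite !vhom_add. reflexivity. }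
  assert (phile : forall x y, vdist x y ⊑ vdist (phif x) (phif y)).
  { intros; simpl. apply glb; apply vhom_le. }
  set (phi := @VHomMk V P Pc phif phiadd phile).
  destruct (Hu P p1 p2 Hc) as [_ Huniq].
  assert (Hid : forall q, u (phif q) = q).
  { intros q. apply (Huniq (compH u phi) (idH P)); intros; simpl.
    - apply (Hu1 (phif w)).
    - apply (Hu2 (phif w)).
    - reflexivity.
    - reflexivity. }
  split.
  - intros q q' E1 E2. rewrite <- (Hid q), <- (Hid q').
    f_equal. apply sig_eq. simpl. rewrite E1, E2. reflexivity.
  - intros q q'. pose proof (vhom_le u (phif q) (phif q')) as HH.
    rewrite !Hid in HH. exact HH.
Qed.
End Abs.
Section PartA.
Context {V : frame}.
Notation "a ⊑ b" := (@fle V a b) (at level 70).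
Notation "a ⊓ b" := (@fmeet V a b) (at level 40, left associativity).
Notation "x ⊕ y" := (vadd x y) (at level 50, left associativity).
Notation "⊖ x" := (vopp x) (at level 35).

Lemma key_le {A Y Z P : VGroup V} (Hsym : symmetric_VCat Y) (f : VHom A Y) (s : VHom Y A)
  (g : VHom Z Y) (p1 : VHom P A) (p2 : VHom P Z) (Hc : forall p, f (p1 p) = g (p2 p)) (x y : P) :
  vdist x y ⊑ vdist (p1 x ⊕ ⊖ s (g (p2 x))) (p1 y ⊕ ⊖ s (g (p2 y))).
Proof.
  eapply ltrans; [|apply vdist_add]. apply glb; [apply vhom_le|].
  eapply ltrans; [|apply dopp]. eapply ltrans; [|apply vhom_le].
  rewrite Hsym, <- !Hc. eapply ltrans; apply vhom_le.
Qed.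

Lemma sym_proto (Y : VGroup V) : symmetric_VCat Y -> protomodular_object Y.
Proof.
  unfold protomodular_object, stably_strong, strong_point, jointly_strongly_epi.
  intros Hsym A f s Hpt Z g P p1 p2 Hpb t Ht1 Ht2 K n Hker M m Hm [u1 Hu1] [u2 Hu2].
  destruct Hker as [Hk0 Hku].
  assert (H0 : p2 vzero = vzero) by apply hom0.
  assert (Ha : forall a b : P, p2 a = vzero -> p2 b = vzero -> p2 (a ⊕ b) = vzero).
  { intros a b Ha1 Hb. rewrite vhom_add, Ha1, Hb. apply vadd0l. }
  assert (Ho : forall a : P, p2 a = vzero -> p2 (⊖ a) = vzero).
  { intros a Ha1. rewrite homN, Ha1. apply opp0. }
  set (W := subVG P (fun w => p2 w = vzero) H0 Ha Ho).
  destruct (Hku W (inclH _ _ H0 Ha Ho) (fun w => proj2_sig w)) as [[u Hu] _].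
  assert (Hw : forall p, p2 (p ⊕ ⊖ t (p2 p)) = vzero).
  { intros p. rewrite vhom_add, homN, Ht2. apply vaddNr. }
  set (wp := fun p => exist (fun w => p2 w = vzero) (p ⊕ ⊖ t (p2 p)) (Hw p) : W).
  set (mi := fun p => u1 (u (wp p)) ⊕ u2 (p2 p)).
  assert (Hkey : forall p, m (mi p) = p).
  { intros p. unfold mi. rewrite vhom_add, Hu1, Hu2, Hu. simpl. apply addKr'. }
  pose proof (mono_inj m Hm) as minj.
  assert (miadd : forall x y, mi (x ⊕ y) = mi x ⊕ mi y).
  { intros x y. apply minj. rewrite vhom_add, !Hkey. reflexivity. }
  assert (mile : forall x y, vdist x y ⊑ vdist (mi x) (mi y)).
  { intros x y. unfold mi.
    eapply ltrans; [|apply vdist_add]. apply glb.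
    - eapply ltrans; [|apply vhom_le]. eapply ltrans; [|apply vhom_le]. simpl.
      eapply ltrans; [|apply (proj2 (pb_facts _ _ _ _ Hpb))]. apply glb.
      + rewrite !vhom_add, !homN, !Ht1. apply (key_le Hsym f s g p1 p2 (proj1 Hpb)).
      + rewrite !Hw. apply dtop.
    - eapply ltrans; [|apply vhom_le]. apply vhom_le. }
  exists (@VHomMk V P M mi miadd mile). simpl. split.
  - intros x. apply minj. apply Hkey.
  - apply Hkey.
Qed.

Lemma sym_maltsev (Y : VGroup V) : symmetric_VCat Y -> maltsev_object Y.
Proof.
  unfold maltsev_object, jointly_strongly_epi.
  intros Hsym A f s Z g t Hfs Hgt P p1 p2 Hpb al be Hal1 Hal2 Hbe1 Hbe2 M m Hm [u1 Hu1] [u2 Hu2].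
  destruct (pb_facts _ _ _ _ Hpb) as [Hinj _].
  pose proof (proj1 Hpb) as Hc.
  set (mi := fun p => u1 (p1 p ⊕ ⊖ s (g (p2 p))) ⊕ u2 (p2 p)).
  assert (Hkey : forall p, m (mi p) = p).
  { intros p. unfold mi. rewrite vhom_add, Hu1, Hu2. apply Hinj.
    - rewrite vhom_add, Hal1, Hbe1. apply addKr'.
    - rewrite vhom_add, Hal2, Hbe2, vhom_add, homN, Hfs, Hc, vaddNr, hom0. apply vadd0l. }
  pose proof (mono_inj m Hm) as minj.
  assert (miadd : forall x y, mi (x ⊕ y) = mi x ⊕ mi y).
  { intros x y. apply minj. rewrite vhom_add, !Hkey. reflexivity. }
  assert (mile : forall x y, vdist x y ⊑ vdist (mi x) (mi y)).
  { intros x y. unfold mi.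
    eapply ltrans; [|apply vdist_add]. apply glb.
    - eapply ltrans; [|apply vhom_le]. apply (key_le Hsym f s g p1 p2 Hc).
    - eapply ltrans; [|apply vhom_le]. apply vhom_le. }
  exists (@VHomMk V P M mi miadd mile). simpl. split.
  - intros x. apply minj. apply Hkey.
  - apply Hkey.
Qed.

Lemma proto_su (Y : VGroup V) : protomodular_object Y -> strongly_unital_object Y.
Proof.
  intros H P q1 q2 _ d _ Hd2. apply H. exact Hd2.
Qed.

Lemma sym_ig (Y : VGroup V) : symmetric_VCat Y <-> internal_group_VCat Y.
Proof.
  split.
  - intros Hs. split; [|split].
    + apply vdist_add.
    + intros y y'. rewrite Hs. apply dopp.
    + intros; apply vdist_refl.
  - intros [_ [Hi _]] y y'. apply fle_antisym.
    + eapply ltrans; [apply Hi|]. eapply ltrans; [apply dopp|]. rewrite !opp_opp. apply lrefl.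
    + eapply ltrans; [apply Hi|]. eapply ltrans; [apply dopp|]. rewrite !opp_opp. apply lrefl.
Qed.
End PartA.
Section Conc0.
Context {V : frame}.
Notation "a ⊑ b" := (@fle V a b) (at level 70).
Notation "a ⊓ b" := (@fmeet V a b) (at level 40, left associativity).
Notation "x ⊕ y" := (vadd x y) (at level 50, left associativity).
Notation "⊖ x" := (vopp x) (at level 35).

Definition Zind : VGroup V.
Proof.
  refine {| vcar := Z; vadd := Z.add; vopp := Z.opp; vzero := 0%Z; vdist := fun _ _ => ftop |};
  intros; try lia; apply ftop_max.
Defined.

Lemma conj_opp_eq (G : VGroup V) (x y w : G) :
  ⊖ (⊖ w ⊕ x ⊕ w) ⊕ (⊖ w ⊕ y ⊕ w) = ⊖ w ⊕ (⊖ x ⊕ y) ⊕ w.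
Proof.
  rewrite !opp_add, opp_opp. rewrite !vaddA. rewrite addKr. reflexivity.
Qed.

Inductive Cn (Y : VGroup V) (v : Y) : nat -> Y -> Prop :=
| Cn0 : Cn Y v 0 vzero
| CnS : forall m x w, Cn Y v m x -> Cn Y v (S m) (x ⊕ (⊖ w ⊕ v ⊕ w)).

Definition Cz (Y : VGroup V) (v : Y) (n : Z) (x : Y) : Prop :=
  exists m, n = Z.of_nat m /\ Cn Y v m x.

Context (Y : VGroup V) (v : Y).

Lemma Cn_add m x m' x' : Cn Y v m x -> Cn Y v m' x' -> Cn Y v (m + m') (x ⊕ x').
Proof.
  intros H H'. induction H'.
  - rewrite Nat.add_0_r, vadd0r. exact H.
  - rewrite Nat.add_succ_r, vaddA. apply CnS. auto.
Qed.

Lemma Cn_conj m x w : Cn Y v m x -> Cn Y v m (⊖ w ⊕ x ⊕ w).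
Proof.
  intros H. induction H.
  - rewrite vadd0r, vaddNl. constructor.
  - replace (⊖ w ⊕ (x ⊕ (⊖ w0 ⊕ v ⊕ w0)) ⊕ w) with
      ((⊖ w ⊕ x ⊕ w) ⊕ (⊖ (w0 ⊕ w) ⊕ v ⊕ (w0 ⊕ w))).
    + constructor. auto.
    + rewrite opp_add. rewrite !vaddA. rewrite addKr. reflexivity.
Qed.

Lemma Cz_add n x n' x' : Cz Y v n x -> Cz Y v n' x' -> Cz Y v (n + n') (x ⊕ x').
Proof.
  intros [m [-> H]] [m' [-> H']]. exists (m + m')%nat. split.
  - lia.
  - apply Cn_add; auto.
Qed.

Lemma Cz_conj n x w : Cz Y v n x -> Cz Y v n (⊖ w ⊕ x ⊕ w).
Proof. intros [m [-> H]]. exists m. split; auto. apply Cn_conj; auto. Qed.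

Lemma Cz0 : Cz Y v 0 vzero.
Proof. exists 0%nat. split; [reflexivity|constructor]. Qed.

Lemma Cz1 : Cz Y v 1 v.
Proof.
  exists 1%nat. split; [reflexivity|].
  pose proof (CnS Y v 0 vzero vzero (Cn0 Y v)) as H.
  rewrite opp0, vadd0l, vadd0l, vadd0r in H. exact H.
Qed.

Lemma Cz1_bound x : Cz Y v 1 x -> vdist vzero (⊖ x) ⊑ vdist vzero (⊖ v).
Proof.
  intros [m [Hm H]]. assert (m = 1%nat) by lia. subst m.
  inversion H; subst. inversion H1; subst.
  rewrite vadd0l, !opp_add, opp_opp.
  eapply ltrans; [apply (bconj _ (⊖ w))|].
  rewrite opp_opp, !vaddA, vaddNr, vadd0l, addKr. apply lrefl.
Qed.

Definition bt (y : Y) : V := vdist vzero y.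

Definition bZ (p : prodVG Zind Y) : V :=
  fsup (fun r => exists x, Cz Y v (fst p) x /\ r = bt x ⊓ bt (⊖ x ⊕ snd p)).

Lemma bZ0 : ftop ⊑ bZ vzero.
Proof.
  eapply sup_in. exists vzero. split; [apply Cz0|reflexivity].
  simpl. unfold bt. rewrite opp0, vadd0l. apply glb; apply dtop.
Qed.

Lemma bt_conj_add (x x' y y' : Y) : bt (⊖ x ⊕ y) ⊓ bt (⊖ x' ⊕ y') ⊑ bt (⊖ (x ⊕ x') ⊕ (y ⊕ y')).
Proof.
  unfold bt. rewrite conj_eq. eapply ltrans; [|apply badd]. apply mono; [apply bconj|apply lrefl].
Qed.

Lemma bZadd a b : bZ a ⊓ bZ b ⊑ bZ (a ⊕ b).
Proof.
  apply sup_meet_le. intros s t [x [Hx ->]] [x' [Hx' ->]].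
  eapply sup_in. exists (x ⊕ x'). split; [apply Cz_add; eauto|reflexivity].
  apply glb.
  - eapply ltrans; [|apply badd]. apply mono; apply fmeet_l.
  - eapply ltrans; [|apply bt_conj_add]. apply mono; apply fmeet_r.
Qed.

Lemma bZconj a w : bZ a ⊑ bZ (⊖ w ⊕ a ⊕ w).
Proof.
  destruct a as [na ya], w as [nw yw]. unfold bZ. simpl.
  replace (- nw + na + nw)%Z with na by lia.
  apply fsup_least. intros r [x [Hx ->]].
  eapply sup_in. exists (⊖ yw ⊕ x ⊕ yw). split; [apply Cz_conj; auto|reflexivity].
  rewrite conj_opp_eq. apply mono; apply bconj.
Qed.

Definition Zg : VGroup V := reVG (prodVG Zind Y) bZ bZ0 bZadd bZconj.

Lemma bZ_le (p : prodVG Zind Y) : bZ p ⊑ bt (snd p).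
Proof.
  apply fsup_least. intros r [x [_ ->]]. eapply ltrans; [apply badd|]. rewrite addKl'. apply lrefl.
Qed.

Definition gH : VHom Zg Y.
Proof.
  refine (@VHomMk V Zg Y (fun z => snd z) _ _).
  - intros; reflexivity.
  - intros x y. rewrite (dbeta (snd x)). apply (bZ_le (⊖ x ⊕ y)).
Defined.

End Conc0.
Section Conc1.
Context {V : frame}.
Notation "a ⊑ b" := (@fle V a b) (at level 70).
Notation "a ⊓ b" := (@fmeet V a b) (at level 40, left associativity).
Notation "x ⊕ y" := (vadd x y) (at level 50, left associativity).
Notation "⊖ x" := (vopp x) (at level 35).
Context (Y : VGroup V) (v : Y).
Let Z0 := Zg Y v.
Let b := bt Y.
Let BZ := bZ Y v.

Definition PP : VGroup V := prodVG Y Z0.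

Definition dl (u : Y) (n : Z) : V := fsup (fun r => exists x, Cz Y v n x /\ r = b (⊖ x ⊕ u)).

Definition Gm (p : PP) : V := b (fst p) ⊓ BZ (snd p) ⊓ dl (fst p) (fst (snd p)).

Lemma Gm0 : ftop ⊑ Gm vzero.
Proof.
  unfold Gm. simpl. apply glb; [apply glb|].
  - apply dtop.
  - apply bZ0.
  - eapply sup_in. exists vzero. split; [apply Cz0|reflexivity].
    unfold b, bt. rewrite opp0, vadd0l. apply dtop.
Qed.

Lemma meet4 (a1 a2 b1 b2 : V) : (a1 ⊓ a2) ⊓ (b1 ⊓ b2) ⊑ a1 ⊓ b1.
Proof. apply mono; apply fmeet_l. Qed.
Lemma meet4' (a1 a2 b1 b2 : V) : (a1 ⊓ a2) ⊓ (b1 ⊓ b2) ⊑ a2 ⊓ b2.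
Proof. apply mono; apply fmeet_r. Qed.

Lemma dl_add u n u' n' : dl u n ⊓ dl u' n' ⊑ dl (u ⊕ u') (n + n').
Proof.
  apply sup_meet_le. intros s t [x [Hx ->]] [x' [Hx' ->]].
  eapply sup_in. exists (x ⊕ x'). split; [apply Cz_add; eauto|reflexivity].
  apply bt_conj_add.
Qed.

Lemma Gmadd p q : Gm p ⊓ Gm q ⊑ Gm (p ⊕ q).
Proof.
  unfold Gm. apply glb; [apply glb|].
  - eapply ltrans; [apply meet4|]. eapply ltrans; [apply meet4|]. apply badd.
  - eapply ltrans; [apply meet4|]. eapply ltrans; [apply meet4'|]. apply bZadd.
  - eapply ltrans; [apply meet4'|]. apply dl_add.
Qed.

Lemma dl_conj u n a m : dl u n ⊑ dl (⊖ a ⊕ u ⊕ a) (- m + n + m).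
Proof.
  replace (- m + n + m)%Z with n by lia.
  apply fsup_least. intros r [x [Hx ->]].
  eapply sup_in. exists (⊖ a ⊕ x ⊕ a). split; [apply Cz_conj; auto|reflexivity].
  unfold b. rewrite conj_opp_eq. apply bconj.
Qed.

Lemma Gmconj p w : Gm p ⊑ Gm (⊖ w ⊕ p ⊕ w).
Proof.
  unfold Gm. apply mono; [apply mono|].
  - apply bconj.
  - apply (bZconj Y v (snd p) (snd w)).
  - apply dl_conj.
Qed.

Definition MM : VGroup V := reVG PP Gm Gm0 Gmadd Gmconj.

Definition mH : VHom MM PP.
Proof.
  refine (@VHomMk V MM PP (fun x => x) _ _).
  - intros; reflexivity.
  - intros x y.
    change (b (⊖ fst x ⊕ fst y) ⊓ BZ (@vadd V (prodVG Zind Y) (⊖ snd x) (snd y))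
              ⊓ dl (⊖ fst x ⊕ fst y) (- fst (snd x) + fst (snd y))
            ⊑ vdist (fst x) (fst y) ⊓ BZ (@vadd V (prodVG Zind Y) (⊖ snd x) (snd y))).
    rewrite (dbeta (fst x)). apply ml. apply lrefl.
Defined.

Lemma mH_mono : is_mono mH.
Proof. intros W u w H x. apply (H x). Qed.

Lemma final (m' : VHom PP MM) : (forall x, m' x = x) -> b v ⊑ b (⊖ v).
Proof.
  intros Hm.
  pose proof (vhom_le m' vzero (vzero, (1%Z, v))) as H.
  rewrite !Hm in H. simpl in H. unfold Gm in H. simpl in H.
  eapply ltrans; [|eapply ltrans; [apply H|]].
  - apply glb; [apply dtop|].
    eapply sup_in. exists v. split; [apply Cz1|reflexivity].
    simpl. unfold bt. rewrite opp0, vadd0l, vaddNl. apply glb; [apply lrefl|apply dtop].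
  - apply mr. apply fsup_least. intros r [x [Hx ->]].
    unfold b. rewrite opp0, vadd0l, vadd0r. apply Cz1_bound. exact Hx.
Qed.
End Conc1.
Section Conc2.
Context {V : frame}.
Notation "a ⊑ b" := (@fle V a b) (at level 70).
Notation "a ⊓ b" := (@fmeet V a b) (at level 40, left associativity).
Notation "x ⊕ y" := (vadd x y) (at level 50, left associativity).
Notation "⊖ x" := (vopp x) (at level 35).
Context (Y : VGroup V) (v : Y).
Let Z0 := Zg Y v.
Let P := PP Y v.
Let M := MM Y v.
Let YY := prodVG Y Y.

Definition diagH : VHom Y YY.
Proof.
  refine (@VHomMk V Y YY (fun y => (y, y)) _ _); intros; simpl.
  reflexivity. apply glb; apply lrefl.
Defined.

Lemma YY_prod : is_product (fstH Y Y) (sndH Y Y).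
Proof.
  intros W h1 h2. split.
  - assert (Ha : forall x y, (h1 (x ⊕ y), h2 (x ⊕ y)) = @vadd V YY (h1 x, h2 x) (h1 y, h2 y)).
    { intros; simpl; rewrite !vhom_add; reflexivity. }
    assert (Hl : forall x y, vdist x y ⊑ @vdist V YY (h1 x, h2 x) (h1 y, h2 y)).
    { intros; simpl; apply glb; apply vhom_le. }
    exists (@VHomMk V W YY _ Ha Hl). simpl. split; reflexivity.
  - intros u1 u2 A1 A2 B1 B2 w. simpl in *.
    rewrite (surjective_pairing (u1 w)), (surjective_pairing (u2 w)), A1, A2, B1, B2. reflexivity.
Qed.

Definition p1H : VHom P YY.
Proof.
  refine (@VHomMk V P YY (fun p => (fst p, snd (snd p))) _ _).
  - intros; reflexivity.
  - intros x y. apply mono; [apply lrefl|apply (vhom_le (gH Y v))].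
Defined.

Lemma P_pb : is_pullback (sndH Y Y) (gH Y v) p1H (sndH Y Z0).
Proof.
  split; [intros; reflexivity|].
  intros W h1 h2 Hh. split.
  - assert (Ha : forall x y, (fst (h1 (x ⊕ y)), h2 (x ⊕ y)) =
                             @vadd V P (fst (h1 x), h2 x) (fst (h1 y), h2 y)).
    { intros; rewrite !vhom_add; reflexivity. }
    assert (Hl : forall x y, vdist x y ⊑ @vdist V P (fst (h1 x), h2 x) (fst (h1 y), h2 y)).
    { intros; apply glb.
      - eapply ltrans; [apply (vhom_le h1)|]. exact (fmeet_l _ _).
      - apply vhom_le. }
    exists (@VHomMk V W P _ Ha Hl). simpl. split; [|reflexivity].
    intros w. rewrite (surjective_pairing (h1 w)). simpl. f_equal. symmetry. apply (Hh w).
  - intros u1 u2 A1 A2 B1 B2 w.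
    rewrite (surjective_pairing (u1 w)), (surjective_pairing (u2 w)).
    f_equal.
    + pose proof (f_equal fst (A1 w)) as E1. pose proof (f_equal fst (B1 w)) as E2.
      simpl in E1, E2. etransitivity; [exact E1|symmetry; exact E2].
    + etransitivity; [exact (A2 w)|symmetry; exact (B2 w)].
Qed.

Definition tH : VHom Z0 P.
Proof.
  refine (@VHomMk V Z0 P (fun z => (snd z, z)) _ _).
  - intros; reflexivity.
  - intros x y. apply glb; [apply (vhom_le (gH Y v))|apply lrefl].
Defined.

Definition nK : VHom Y P.
Proof.
  refine (@VHomMk V Y P (fun k => (k, vzero)) _ _).
  - intros x y. change ((x ⊕ y, @vzero V Z0) = (x ⊕ y, @vadd V Z0 vzero vzero)). rewrite (@vadd0l V Z0). reflexivity.
  - intros x y. apply glb; [apply lrefl|apply dtop].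
Defined.

Lemma nK_ker : is_kernel (sndH Y Z0) nK.
Proof.
  split; [intros; reflexivity|].
  intros W h Hh. split.
  - exists (compH (fstH Y Z0) h). intros w. simpl.
    rewrite (surjective_pairing (h w)). simpl. f_equal. symmetry. apply (Hh w).
  - intros u1 u2 A B w. pose proof (f_equal fst (A w)). pose proof (f_equal fst (B w)).
    simpl in *. congruence.
Qed.

Definition tY : VHom Y Z0.
Proof.
  refine (@VHomMk V Y Z0 (fun y => (0%Z, y)) _ _).
  - intros; reflexivity.
  - intros x y.
    eapply sup_in. exists vzero. split; [apply Cz0|reflexivity].
    simpl. unfold bt. rewrite opp0, vadd0l, (dbeta x). apply glb; [apply dtop|apply lrefl].
Defined.

Definition alH : VHom YY P.
Proof.
  refine (@VHomMk V YY P (fun a => (fst a, tY (snd a))) _ _).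
  - intros; reflexivity.
  - intros x y. apply mono; [apply lrefl|apply vhom_le].
Defined.

Lemma bZ0y (y : Y) : bt Y y ⊑ bZ Y v (0%Z, y).
Proof.
  eapply sup_in. exists vzero. split; [apply Cz0|reflexivity].
  simpl. unfold bt. rewrite opp0, vadd0l. apply glb; [apply dtop|apply lrefl].
Qed.
Lemma dl0 (u : Y) : bt Y u ⊑ dl Y v u 0.
Proof.
  eapply sup_in. exists vzero. split; [apply Cz0|reflexivity].
  unfold bt. rewrite opp0, vadd0l. apply lrefl.
Qed.

Definition nKM : VHom Y M.
Proof.
  refine (@VHomMk V Y M (fun k => (k, vzero)) _ _).
  - intros x y. change ((x ⊕ y, @vzero V Z0) = (x ⊕ y, @vadd V Z0 vzero vzero)). rewrite (@vadd0l V Z0). reflexivity.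
  - intros x y.
    change (vdist x y ⊑ bt Y (⊖ x ⊕ y) ⊓ bZ Y v (0%Z, ⊖ vzero ⊕ vzero) ⊓ dl Y v (⊖ x ⊕ y) 0).
    rewrite opp0, vadd0l, (dbeta x). apply glb; [apply glb|].
    + apply lrefl.
    + apply top_le. apply bZ0.
    + apply dl0.
Defined.

Definition tM : VHom Z0 M.
Proof.
  refine (@VHomMk V Z0 M (fun z => (snd z, z)) _ _).
  - intros; reflexivity.
  - intros x y.
    change (bZ Y v (@vadd V (prodVG Zind Y) (⊖ x) y) ⊑
            bt Y (snd (@vadd V (prodVG Zind Y) (⊖ x) y)) ⊓ bZ Y v (@vadd V (prodVG Zind Y) (⊖ x) y)
            ⊓ dl Y v (snd (@vadd V (prodVG Zind Y) (⊖ x) y)) (fst (@vadd V (prodVG Zind Y) (⊖ x) y))).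
    generalize (@vadd V (prodVG Zind Y) (⊖ x) y) as q. intros [n y0].
    apply glb; [apply glb|].
    + apply (bZ_le Y v (n, y0)).
    + apply lrefl.
    + apply fsup_least. intros r [x0 [Hx ->]]. eapply sup_in. exists x0. split; [exact Hx|reflexivity].
      apply fmeet_r.
Defined.

Definition alM : VHom YY M.
Proof.
  refine (@VHomMk V YY M (fun a => (fst a, (0%Z, snd a))) _ _).
  - intros; reflexivity.
  - intros x y.
    change (vdist (fst x) (fst y) ⊓ vdist (snd x) (snd y) ⊑
            bt Y (⊖ fst x ⊕ fst y) ⊓ bZ Y v (0%Z, ⊖ snd x ⊕ snd y) ⊓ dl Y v (⊖ fst x ⊕ fst y) 0).
    rewrite (dbeta (fst x)), (dbeta (snd x)). apply glb; [apply glb|].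
    + apply fmeet_l.
    + apply mr. apply bZ0y.
    + apply ml. apply dl0.
Defined.

Lemma beta_half : bt Y v ⊑ bt Y (⊖ v) -> True.
Proof. auto. Qed.

Lemma su_half : strongly_unital_object Y -> bt Y v ⊑ bt Y (⊖ v).
Proof.
  intros H.
  specialize (H YY (fstH Y Y) (sndH Y Y) YY_prod diagH (fun _ => eq_refl) (fun _ => eq_refl)
                Z0 (gH Y v) P p1H (sndH Y Z0) P_pb tH (fun _ => eq_refl) (fun _ => eq_refl)
                Y nK nK_ker M (mH Y v) (mH_mono Y v)).
  destruct H as [m' [Hm1 Hm2]].
  - exists nKM. intros; reflexivity.
  - exists tM. intros; reflexivity.
  - apply (final Y v m'). exact Hm2.
Qed.

Lemma mal_half : maltsev_object Y -> bt Y v ⊑ bt Y (⊖ v).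
Proof.
  intros H.
  specialize (H YY (sndH Y Y) diagH Z0 (gH Y v) tY (fun _ => eq_refl) (fun _ => eq_refl)
                P p1H (sndH Y Z0) P_pb alH tH).
  assert (A1 : forall a, p1H (alH a) = a). { intros [a1 a2]. reflexivity. }
  specialize (H A1 (fun _ => eq_refl) (fun _ => eq_refl) (fun _ => eq_refl) M (mH Y v) (mH_mono Y v)).
  destruct H as [m' [Hm1 Hm2]].
  - exists alM. intros; reflexivity.
  - exists tM. intros; reflexivity.
  - apply (final Y v m'). exact Hm2.
Qed.
End Conc2.
Lemma sym_of_half {V : frame} (Y : VGroup V) :
  (forall v : Y, fle (bt Y v) (bt Y (vopp v))) -> symmetric_VCat Y.
Proof.
  intros H.
  assert (K : forall y y' : Y, fle (vdist y y') (vdist y' y)).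
  { intros y y'. rewrite (dbeta y), (dbeta y'). eapply ltrans; [apply H|].
    unfold bt. rewrite opp_add, opp_opp. apply lrefl. }
  intros y y'. apply fle_antisym; apply K.
Qed.

Theorem theorem6p5 (V : frame) (Y : VGroup V) :
  (protomodular_object Y <-> maltsev_object Y) /\
  (maltsev_object Y <-> strongly_unital_object Y) /\
  (strongly_unital_object Y <-> symmetric_VCat Y) /\
  (symmetric_VCat Y <-> internal_group_VCat Y).
Proof.
  assert (S1 : strongly_unital_object Y -> symmetric_VCat Y).
  { intros H. apply sym_of_half. intros v. apply su_half. exact H. }
  assert (S2 : maltsev_object Y -> symmetric_VCat Y).
  { intros H. apply sym_of_half. intros v. apply mal_half. exact H. }
  pose proof (@sym_proto V Y) as P1.
  pose proof (@sym_maltsev V Y) as P2.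
  pose proof (@proto_su V Y) as P3.
  pose proof (@sym_ig V Y) as P4.
  split; [|split; [|split]]; try tauto.
Qed.
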